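(* In the setting described in the context, let $z\in\mathbb Z^{n(n-1)/2}$ and $g\in\{e_r,f_r,q^{\epsilon_r}\}$ (for admissible indices $r$). Then (i) $\mathcal D^{\bar v}([x-y]_q\, g\,T(v+z))=\mathcal D^{\bar v}([x-y]_q\, g\,T(v+\tau(z)))$ for all $z$; (ii) $\mathcal D^{\bar v}(g\,T(v+z))=-\mathcal D^{\bar v}(g\,T(v+\tau(z)))$ for all $z$ with $\tau(z)\neq z$.
   Context: Conventions. Fix $n\ge2$ and $q\in\mathbb C\setminus\{0,\pm1\}$ with a fixed $\ln q$; $q^x:=e^{x\ln q}$, $[x]_q:=\frac{q^x-q^{-x}}{q-q^{-1}}$, $1(q):=\{x\in\mathbb C:q^x=1\}$, and for $A\subseteq\mathbb Z$, $A+\frac{1(q)}2:=\{a+c/2: a\in A, c\in 1(q)\}$. Algebra. $P=\bigoplus_{i=1}^n\mathbb Z\epsilon_i$, $\langle\epsilon_i,\epsilon_j\rangle=\delta_{ij}$, $\alpha_i=\epsilon_i-\epsilon_{i+1}$. $U_q$ is the unital algebra generated by $e_i,f_i$ ($1\le i\le n-1$), $q^h$ ($h\in P$) with relations $q^0=1$, $q^hq^{h'}=q^{h+h'}$, $q^he_iq^{-h}=q^{\langle h,\alpha_i\rangle}e_i$, $q^hf_iq^{-h}=q^{-\langle h,\alpha_i\rangle}f_i$, $e_if_j-f_je_i=\delta_{ij}\frac{q^{\alpha_i}-q^{-\alpha_i}}{q-q^{-1}}$, quantum Serre relations $e_i^2e_j-(q+q^{-1})e_ie_je_i+e_je_i^2=0$,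 $f_i^2f_j-(q+q^{-1})f_if_jf_i+f_jf_i^2=0$ ($|i-j|=1$), and $e_ie_j=e_je_i$, $f_if_j=f_jf_i$ ($|i-j|>1$). Tableaux. For $w=(w_{rs})_{1\le s\le r\le n}$ (entries in $\mathbb C$ or in $\mathbb C(x,y)$), $T(w)$ is a formal symbol (Gelfand–Tsetlin tableau). $\delta^{rs}$ has $1$ at position $(r,s)$ and $0$ elsewhere; $\mathbb Z^{n(n-1)/2}$ denotes integer vectors supported on positions $(r,s)$ with $r\le n-1$. Relations. $\mathfrak V=\{(r,s):1\le s\le r\le n\}$. $\mathcal R$ is the set of formal relations $(r,s)\ge(r-1,t)$, $(r-1,t)>(r,s)$ ($2\le r\le n$, $1\le s\le r$, $1\le t\le r-1$) and $(n,s)\ge(n,t)$ ($s\ne t$). For $\mathcal C\subseteq\mathcal R$, $\mathfrak V(\mathcal C)$ is the set of points of $\mathfrak V$ occurring in relations of $\mathcal C$; $\mathcal C_1,\mathcal C_2$ are disconnected if $\mathfrak V(\mathcal C_1)\cap\mathfrak V(\mathcal C_2)=\emptyset$; $\mathcal C$ is indecomposable if it is not a union of two disconnected nonempty subsets. $p\succeq_{\mathcal C}p'$ means there is a chain $p=p_0,\dots,p_{m}=p'$ with each $p_a\ge p_{a+1}$ or $p_a>p_{a+1}$ in $\mathcal C$; $p\succ_{\mathcal C}p'$ if some link is strict. A cross is $\{(k,i)\ge(k-1,t),(k-1,s)>(k,j)\}$ with $i<j$, $s<t$. An indecomposable $\mathcal C$ is admissible if (i) for $2\le k\le n$, $(k,i)\succ_{\mathcal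 C}(k,j)$ only if $i<j$; (ii) $(n,i)\succeq_{\mathcal C}(n,j)$ only if $i<j$; (iii) $\mathcal C$ has no cross; (iv) for all $(k,i),(k,j)\in\mathfrak V(\mathcal C)$, $1\le k\le n-1$, $i<j$, there are $s,t$ with $\{(k,i)>(k+1,s),(k+1,s)\ge(k,j),(k,i)\ge(k-1,t),(k-1,t)>(k,j)\}\subseteq\mathcal C$, or with $s<t$ and $\{(k,i)>(k+1,s),(k+1,t)\ge(k,j)\}\subseteq\mathcal C$. A general $\mathcal C$ is admissible if every indecomposable component is. Satisfaction. $T(L)$ satisfies $(r,s)\ge(r',s')$ (resp. $>$) if $l_{rs}-l_{r's'}\in\mathbb Z_{\ge0}+\frac{1(q)}2$ (resp. $\mathbb Z_{>0}+\frac{1(q)}2$). $T(L)$ satisfies $\mathcal C$ if it satisfies all relations of $\mathcal C$ and $l_{ki}-l_{kj}\in\mathbb Z+\frac{1(q)}2$ ($i\neq j$) only if $(k,i),(k,j)$ lie in $\mathfrak V(\mathcal C')$ for one indecomposable component $\mathcal C'$. $\mathcal B_{\mathcal C}(T(L))=\{T(L+z):z\in\mathbb Z^{n(n-1)/2},\ T(L+z)\text{ satisfies }\mathcal C\}$. Gelfand–Tsetlin formulas: $q^{\epsilon_k}T(L)=q^{a_k}T(L)$, $a_k=\sum_{i=1}^kl_{ki}-\sum_{i=1}^{k-1}l_{k-1,i}+k$; $e_kT(L)=-\sum_{j=1}^k\frac{\prod_{i=1}^{k+1}[l_{k+1,i}-l_{kj}]_q}{\prod_{i\ne j}[l_{ki}-l_{kj}]_q}T(L+\delta^{kj})$;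 $f_kT(L)=\sum_{j=1}^k\frac{\prod_{i=1}^{k-1}[l_{k-1,i}-l_{kj}]_q}{\prod_{i\ne j}[l_{ki}-l_{kj}]_q}T(L-\delta^{kj})$, where terms whose tableau does not satisfy $\mathcal C$ are omitted. Standing data. $\mathcal C$ is admissible; $T(\bar v)$, $\bar v\in\mathbb C^{n(n+1)/2}$, is $(1,\mathcal C)$-singular: it satisfies $\mathcal C$ and there is exactly one triple $(k,i,j)$ with $1\le i<j\le k\le n-1$, $(k,i),(k,j)\notin\mathfrak V(\mathcal C)$ and $\bar v_{ki}-\bar v_{kj}\in\mathbb Z+\frac{1(q)}2$; moreover $\bar v_{ki}=\bar v_{kj}$. $\tau$ exchanges the $(k,i)$ and $(k,j)$ coordinates. $v$ is the vector with $v_{ki}=x$, $v_{kj}=y$ ($x,y$ indeterminates) and $v_{rs}=\bar v_{rs}$ otherwise; $V(T(v))=V_{\mathcal C}(T(v))$ is the $\mathbb C(x,y)$-space with basis $T(v+z)$, $T(\bar v+z)\in\mathcal B_{\mathcal C}(T(\bar v))$, with $U_q$ acting by the formulas above. $\overline{\mathcal H}$ is the set of $w$ with $w_{tr}\ne w_{ts}$ for all triples $(t,r,s)\ne(k,i,j)$, and $\mathcal F_{ij}$ is the space of rational functions (of $x,y$) smooth on $\overline{\mathcal H}$; $\mathcal F_{ij}\otimes V(T(v))$ is the set of finite sums $\sum f_zT(v+z)$, $f_z\in\mathcal F_{ij}$. For $f\in\mathcal F_{ij}$: $\mathrm{ev}(\bar v)(f)=f(\bar v)$ is the value at $x=\bar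 v_{ki},y=\bar v_{kj}$ and $\mathcal D^{\bar v}(f)=\frac{q-q^{-1}}{4\ln q}(\partial_xf-\partial_yf)(\bar v)$. $V_{\mathcal C}(T(\bar v))$ is the $\mathbb C$-space spanned by symbols $T(\bar v+z),\mathcal DT(\bar v+z)$ ($T(\bar v+z)\in\mathcal B_{\mathcal C}(T(\bar v))$) subject to $T(\bar v+z)=T(\bar v+\tau(z))$, $\mathcal DT(\bar v+z)+\mathcal DT(\bar v+\tau(z))=0$. On $\mathcal F_{ij}\otimes V(T(v))$: $\mathrm{ev}(\bar v)(fT(v+z))=f(\bar v)T(\bar v+z)$ and $\mathcal D^{\bar v}(fT(v+z))=\mathcal D^{\bar v}(f)T(\bar v+z)+f(\bar v)\mathcal DT(\bar v+z)$, extended linearly (both sides of the claim lie in $\mathcal F_{ij}\otimes V(T(v))$ before applying $\mathcal D^{\bar v}$). *)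

(* Defs.v *)
From Stdlib Require Import Reals ZArith List Arith Bool Relations ClassicalEpsilon.
From Coquelicot Require Import Coquelicot.
Import ListNotations.

Open Scope C_scope.
Local Open Scope bool_scope.

Definition cexp (z : C) : C :=
  ((exp (fst z) * cos (snd z))%R, (exp (fst z) * sin (snd z))%R).

Definition qpow (lnq x : C) : C := cexp (x * lnq).

Definition qnum (q lnq x : C) : C := (qpow lnq x - qpow lnq (- x)) / (q - / q).

Definition in_one_q (lnq c : C) : Prop := qpow lnq c = 1.

Definition in_Zge (lnq d : C) : Prop :=
  exists (m : Z) (c : C), (0 <= m)%Z /\ in_one_q lnq c /\ d = RtoC (IZR m) + c / 2.
Definition in_Zgt (lnq d : C) : Prop :=
  exists (m : Z) (c : C), (0 < m)%Z /\ in_one_q lnq c /\ d = RtoC (IZR m) + c / 2.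
Definition in_Z (lnq d : C) : Prop :=
  exists (m : Z) (c : C), in_one_q lnq c /\ d = RtoC (IZR m) + c / 2.

(* A Gelfand-Tsetlin tableau: entry (r,s), 1 <= s <= r <= n (1-based);
   values at other positions are irrelevant. *)
Definition tab := nat -> nat -> C.
(* integer vectors z in Z^{n(n-1)/2}: only positions (r,s) with r <= n-1
   are ever used (see [shift] and [idx_eqb]). *)
Definition idx := nat -> nat -> Z.

Definition shift (n : nat) (L : tab) (z : idx) : tab :=
  fun r s => L r s + (if r <? n then RtoC (IZR (z r s)) else 0).

Definition bump (z : idx) (r s : nat) (d : Z) : idx :=
  fun r' s' => if (r' =? r) && (s' =? s) then (z r' s' + d)%Z else z r' s'.

Definition idx_eqb (n : nat) (z w : idx) : bool :=
  forallb (fun r => forallb (fun s => Z.eqb (z r s) (w r s)) (seq 1 r)) (seq 1 (n - 1)%nat).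

Definition tau (k i j : nat) (z : idx) : idx :=
  fun r s => if (r =? k) && (s =? i) then z k j
             else if (r =? k) && (s =? j) then z k i else z r s.

Inductive grel : Type :=
| Rge : nat * nat -> nat * nat -> grel
| Rgt : nat * nat -> nat * nat -> grel.

Definition in_R (n : nat) (rho : grel) : Prop :=
  match rho with
  | Rge (r, s) (r', t) =>
      (2 <= r <= n /\ 1 <= s <= r /\ r' = (r - 1)%nat /\ 1 <= t <= r - 1)%nat
      \/ (r = n /\ r' = n /\ 1 <= s <= n /\ 1 <= t <= n /\ s <> t)%nat
  | Rgt (r', t) (r, s) =>
      (2 <= r <= n /\ 1 <= s <= r /\ r' = (r - 1)%nat /\ 1 <= t <= r - 1)%nat
  end.

Definition rset := grel -> Prop.

Definition pts (rho : grel) : list (nat * nat) :=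
  match rho with Rge p p' => [p; p'] | Rgt p p' => [p; p'] end.

Definition in_V (P : rset) (p : nat * nat) : Prop :=
  exists rho, P rho /\ In p (pts rho).

Definition disconnected (P1 P2 : rset) : Prop :=
  forall p, ~ (in_V P1 p /\ in_V P2 p).

Definition nonempty (P : rset) : Prop := exists rho, P rho.

Definition indecomposable (P : rset) : Prop :=
  ~ exists P1 P2 : rset, nonempty P1 /\ nonempty P2 /\
      (forall rho, P rho <-> (P1 rho \/ P2 rho)) /\ disconnected P1 P2.

Definition component (C P : rset) : Prop :=
  nonempty P /\ (forall rho, P rho -> C rho) /\ indecomposable P /\
  disconnected P (fun rho => C rho /\ ~ P rho).

Definition link (P : rset) (p p' : nat * nat) : Prop := P (Rge p p') \/ P (Rgt p p').

Definition succeq (P : rset) : relation (nat * nat) := clos_trans _ (link P).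

Definition succ (P : rset) (p p' : nat * nat) : Prop :=
  exists a b, clos_refl_trans _ (link P) p a /\ P (Rgt a b) /\
              clos_refl_trans _ (link P) b p'.

Definition has_cross (P : rset) : Prop :=
  exists k i j s t, (i < j)%nat /\ (s < t)%nat /\
    P (Rge (k, i) ((k - 1)%nat, t)) /\ P (Rgt ((k - 1)%nat, s) (k, j)).

Definition admissible_indec (n : nat) (P : rset) : Prop :=
  (forall k i j, (2 <= k <= n)%nat -> succ P (k, i) (k, j) -> (i < j)%nat) /\
  (forall i j, succeq P (n, i) (n, j) -> (i < j)%nat) /\
  ~ has_cross P /\
  (forall k i j, (1 <= k <= n - 1)%nat -> in_V P (k, i) -> in_V P (k, j) -> (i < j)%nat ->
     (exists s t, P (Rgt (k, i) ((k + 1)%nat, s)) /\ P (Rge ((k + 1)%nat, s) (k, j)) /\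
                  P (Rge (k, i) ((k - 1)%nat, t)) /\ P (Rgt ((k - 1)%nat, t) (k, j)))
     \/ (exists s t, (s < t)%nat /\ P (Rgt (k, i) ((k + 1)%nat, s)) /\ P (Rge ((k + 1)%nat, t) (k, j)))).

Definition admissible (n : nat) (C : rset) : Prop :=
  forall P, component C P -> admissible_indec n P.

Definition sat_rel (lnq : C) (L : tab) (rho : grel) : Prop :=
  match rho with
  | Rge (r, s) (r', s') => in_Zge lnq (L r s - L r' s')
  | Rgt (r, s) (r', s') => in_Zgt lnq (L r s - L r' s')
  end.

(* T(L) satisfies C, except that the integrality condition is not imposed on
   the singular pair (k0,i0),(k0,j0). *)
Definition sat_C_except (n : nat) (lnq : C) (Crel : rset) (L : tab) (k0 i0 j0 : nat) : Prop :=
  (forall rho, Crel rho -> sat_rel lnq L rho) /\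
  (forall k a b, (1 <= k <= n)%nat -> (1 <= a <= k)%nat -> (1 <= b <= k)%nat -> a <> b ->
     in_Z lnq (L k a - L k b) ->
     (k = k0 /\ ((a = i0 /\ b = j0) \/ (a = j0 /\ b = i0)))
     \/ exists P, component Crel P /\ in_V P (k, a) /\ in_V P (k, b)).

Definition one_C_singular (n : nat) (lnq : C) (Crel : rset) (vbar : tab) (k i j : nat) : Prop :=
  sat_C_except n lnq Crel vbar k i j /\
  (1 <= i < j /\ j <= k <= n - 1)%nat /\
  ~ in_V Crel (k, i) /\ ~ in_V Crel (k, j) /\
  in_Z lnq (vbar k i - vbar k j) /\
  (forall k' i' j', (1 <= i' < j' /\ j' <= k' <= n - 1)%nat ->
     ~ in_V Crel (k', i') -> ~ in_V Crel (k', j') ->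
     in_Z lnq (vbar k' i' - vbar k' j') -> k' = k /\ i' = i /\ j' = j) /\
  vbar k i = vbar k j.

Definition inB (n : nat) (lnq : C) (Crel : rset) (vbar : tab) (k i j : nat) (z : idx) : Prop :=
  sat_C_except n lnq Crel (shift n vbar z) k i j.

(* classical decision, used to omit terms whose tableau does not satisfy C *)
Definition pdec (P : Prop) : bool :=
  if excluded_middle_informative P then true else false.

(* entries of the generic tableau T(v+z), as functions of xy = (x,y) *)
Definition gent (n : nat) (vbar : tab) (k i j : nat) (z : idx) (xy : C * C) : tab :=
  fun r s => if (r =? k) && (s =? i) then fst xy + RtoC (IZR (z k i))
             else if (r =? k) && (s =? j) then snd xy + RtoC (IZR (z k j))
             else shift n vbar z r s.

Definition Cprod (l : list nat) (f : nat -> C) : C := fold_right (fun a acc => f a * acc) 1 l.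
Definition Csum (l : list nat) (f : nat -> C) : C := fold_right (fun a acc => f a + acc) 0 l.

Inductive gen : Type := GE (r : nat) | GF (r : nat) | GK (r : nat).

Definition valid_gen (n : nat) (g : gen) : Prop :=
  match g with
  | GE r => (1 <= r <= n - 1)%nat
  | GF r => (1 <= r <= n - 1)%nat
  | GK r => (1 <= r <= n)%nat
  end.

(* an element sum_w f_w T(v+w) of F_ij (x) V(T(v)), as a list of pairs (f_w, w) *)
Definition fsum := list ((C * C -> C) * idx).

Definition act (n : nat) (q lnq : C) (Crel : rset) (vbar : tab) (k i j : nat)
    (g : gen) (z : idx) : fsum :=
  let L := gent n vbar k i j z in
  let B := inB n lnq Crel vbar k i j in
  let den r jj xy := Cprod (filter (fun a => negb (a =? jj)) (seq 1 r))
                           (fun a => qnum q lnq (L xy r a - L xy r jj)) in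
  match g with
  | GE r =>
      flat_map (fun jj =>
        if pdec (B (bump z r jj 1)) then
          [((fun xy => - (Cprod (seq 1 (r + 1)%nat)
                              (fun a => qnum q lnq (L xy (r + 1)%nat a - L xy r jj))) / den r jj xy),
            bump z r jj 1)]
        else []) (seq 1 r)
  | GF r =>
      flat_map (fun jj =>
        if pdec (B (bump z r jj (-1))) then
          [((fun xy => (Cprod (seq 1 (r - 1)%nat)
                              (fun a => qnum q lnq (L xy (r - 1)%nat a - L xy r jj))) / den r jj xy),
            bump z r jj (-1))]
        else []) (seq 1 r)
  | GK r =>
      [((fun xy => qpow lnq (Csum (seq 1 r) (fun a => L xy r a)
                             - Csum (seq 1 (r - 1)%nat) (fun a => L xy (r - 1)%nat a)
                             + RtoC (INR r))), z)]
  end.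

Definition scale_qxy (q lnq : C) (S : fsum) : fsum :=
  map (fun fw => ((fun xy => qnum q lnq (fst xy - snd xy) * fst fw xy), snd fw)) S.

(* f in F_ij has value c = f(vbar) and D^vbar(f) = d at vbar = (xb,yb):
   the partial derivatives (complex) at vbar of the (smooth extension of) f are
   a and b, and d = (q-q^{-1})/(4 ln q) (a - b). *)
Definition has_val_D (q lnq : C) (xb yb : C) (f : C * C -> C) (c d : C) : Prop :=
  exists a b : C,
    filterlim (fun h : C => (f (xb + h, yb) - c) / h) (locally' 0) (locally a) /\
    filterlim (fun h : C => (f (xb, yb + h) - c) / h) (locally' 0) (locally b) /\
    d = (q - / q) / (4 * lnq) * (a - b).

(* an element of V_C(T(vbar)) as a list of triples (w, c, d) meaning
   sum c T(vbar+w) + d DT(vbar+w) in the free space on the symbols *)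
Definition qelt := list (idx * C * C).

(* D^vbar (sum_w f_w T(v+w)) = sum_w (D(f_w) T(vbar+w) + f_w(vbar) DT(vbar+w)),
   given the data (c_w, d_w) = (f_w(vbar), D^vbar(f_w)) *)
Definition D_image (S : fsum) (data : list (C * C)) : qelt :=
  map (fun p => let '((f, w), (c, d)) := p in (w, d, c)) (combine S data).

Definition qneg (u : qelt) : qelt := map (fun t => let '(w, a, b) := t in (w, - a, - b)) u.

Definition coefT (n : nat) (u : qelt) (w : idx) : C :=
  fold_right (fun t acc => let '(z, a, b) := t in (if idx_eqb n z w then a else 0) + acc) 0 u.
Definition coefD (n : nat) (u : qelt) (w : idx) : C :=
  fold_right (fun t acc => let '(z, a, b) := t in (if idx_eqb n z w then b else 0) + acc) 0 u.

Definition ind (n : nat) (z w : idx) : C := if idx_eqb n z w then 1 else 0.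

(* equality in V_C(T(vbar)): u - u' lies in the span of the relations
   T(vbar+z) - T(vbar+tau z) and DT(vbar+z) + DT(vbar+tau z), T(vbar+z) in B *)
Definition Qeq (n : nat) (lnq : C) (Crel : rset) (vbar : tab) (k i j : nat) (u u' : qelt) : Prop :=
  exists rels : list (idx * C * C),
    List.Forall (fun t => let '(z, a, b) := t in
              inB n lnq Crel vbar k i j z /\ inB n lnq Crel vbar k i j (tau k i j z)) rels /\
    forall w : idx,
      coefT n u w - coefT n u' w =
        fold_right (fun t acc => let '(z, a, b) := t in
                      a * (ind n z w - ind n (tau k i j z) w) + acc) 0 rels /\
      coefD n u w - coefD n u' w =
        fold_right (fun t acc => let '(z, a, b) := t in
                      b * (ind n z w + ind n (tau k i j z) w) + acc) 0 rels.

(* Main.v *)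
Require Import Defs.
From Stdlib Require Import Reals ZArith List Arith.
From Coquelicot Require Import Coquelicot.
Open Scope C_scope.
From Stdlib Require Import Lia Lra Permutation FunctionalExtensionality ClassicalEpsilon.
Import ListNotations.
Open Scope C_scope.

Definition FR : (C -> Prop) -> Prop := filtermap RtoC (locally' (0:R)).
Definition LIM (f : C -> C) (l : C) := filterlim f FR (locally l).

Lemma FR_proper : ProperFilter' FR.
Proof.
  apply filtermap_proper_filter'. constructor.
  - intros [eps H]. apply (H (eps/2)%R).
    + change (Rabs (minus (eps/2) 0) < eps)%R. unfold minus, plus, opp; simpl.
      destruct eps as [e He]; simpl. rewrite Ropp_0, Rplus_0_r, Rabs_right; lra.
    + destruct eps as [e He]; simpl. lra.
  - apply locally'_filter.
Qed.

Lemma LIM_minus f g a b : LIM f a -> LIM g b -> LIM (fun h => f h - g h) (a - b).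
Proof.
  intros Hf Hg. unfold LIM.
  apply (filterlim_comp_2 (G:=locally a) (H:=locally (opp b)) f (fun h => opp (g h)) (fun u v => plus u v)).
  exact Hf. eapply filterlim_comp; [exact Hg| apply (filterlim_opp (K:=C_AbsRing) (V:=C_NormedModule) b)].
  apply (filterlim_plus (K:=C_AbsRing) (V:=C_NormedModule) a (opp b)).
Qed.

Lemma LIM_mult f g a b : LIM f a -> LIM g b -> LIM (fun h => f h * g h) (a * b).
Proof.
  intros Hf Hg. unfold LIM.
  apply (filterlim_comp_2 (G:=locally a) (H:=locally b) f g (fun u v => mult u v)).
  exact Hf. exact Hg.
  intros P HP. apply locally_C in HP.
  destruct (filterlim_mult (K:=C_AbsRing) a b P HP) as [Q R HQ HR HPQ].
  exists Q R. apply locally_C; exact HQ. apply locally_C; exact HR. exact HPQ.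
Qed.

Lemma LIM_const c : LIM (fun _ => c) c.
Proof. unfold LIM. apply filterlim_const. Qed.

Lemma LIM_id : LIM (fun h => h) (RtoC 0%R).
Proof. unfold LIM, filterlim, filter_le, filtermap, FR. intros P [eps HP].
  exists eps. intros y Hy _. apply HP. split; simpl.
  - exact Hy.
  - change (Rabs (minus 0 0) < eps)%R. unfold minus, plus, opp; simpl.
      destruct eps as [e He]; simpl. rewrite Ropp_0, Rplus_0_r, Rabs_R0; lra.
Qed.

Lemma LIM_ext (f g : C -> C) l : (forall h : C, h <> RtoC 0%R -> f h = g h) -> LIM f l -> LIM g l.
Proof. intros H. unfold LIM. apply filterlim_ext_loc.
  unfold FR, filtermap, locally', within. apply filter_forall. intros x Hx. apply H.
  intros E. apply Hx. injection E; auto. Qed.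

Lemma LIM_unique (f : C -> C) (a b : C) : LIM f a -> LIM f b -> a = b.
Proof. intros Ha Hb.
  exact (filterlim_locally_unique (K:=C_AbsRing) (V:=C_NormedModule) (F:=FR) (FF := FR_proper) f a b Ha Hb). Qed.

Lemma LIM_div0 (K L : C) : LIM (fun h => K / h) L -> K = 0.
Proof.
  intros H. assert (H2 := LIM_mult _ _ _ _ LIM_id H).
  assert (H3 : LIM (fun _ => K) (0 * L)).
  { eapply LIM_ext; [|exact H2]. intros h Hh. simpl. field. exact Hh. }
  assert (H4 := LIM_unique _ _ _ H3 (LIM_const K)). rewrite <- H4. ring.
Qed.


Lemma swap_data q lnq xb (F G : C * C -> C) c d c' d' s :
  has_val_D q lnq xb xb F c d -> has_val_D q lnq xb xb G c' d' ->
  (forall x y, G (x,y) = s * F (y,x)) -> c' = s*c /\ d' = -(s*d).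
Proof.
  intros [a [b [Ha [Hb Hd]]]] [a' [b' [Ha' [Hb' Hd']]]] HG.
  change (LIM (fun h => (F (xb + h, xb) - c) / h) a) in Ha.
  change (LIM (fun h => (F (xb, xb + h) - c) / h) b) in Hb.
  change (LIM (fun h => (G (xb + h, xb) - c') / h) a') in Ha'.
  change (LIM (fun h => (G (xb, xb + h) - c') / h) b') in Hb'.
  assert (Hsb := LIM_mult _ _ _ _ (LIM_const s) Hb).
  assert (Hsa := LIM_mult _ _ _ _ (LIM_const s) Ha).
  assert (Hc : c' = s * c).
  { assert (H1 := LIM_minus _ _ _ _ Ha' Hsb).
    assert (H2 : LIM (fun h => (s * c - c') / h) (a' - s * b)).
    { eapply LIM_ext; [|exact H1]. intros h Hh. simpl. rewrite HG. field. exact Hh. }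
    apply LIM_div0 in H2. 
    replace c' with (s*c - (s*c - c')) by ring. rewrite H2. ring. }
  subst c'.
  assert (Ea : a' = s * b).
  { eapply LIM_unique; [exact Ha'|]. eapply LIM_ext; [|exact Hsb].
    intros h Hh. simpl. rewrite HG. field. exact Hh. }
  assert (Eb : b' = s * a).
  { eapply LIM_unique; [exact Hb'|]. eapply LIM_ext; [|exact Hsa].
    intros h Hh. simpl. rewrite HG. field. exact Hh. }
  split; [reflexivity|]. subst. ring.
Qed.

Ltac eqbs := repeat match goal with |- context [?a =? ?b] => destruct (Nat.eqb_spec a b) | H : context [?a =? ?b] |- _ => destruct (Nat.eqb_spec a b) end.

Lemma perm_filter {A} (f : A -> bool) l l' : Permutation l l' -> Permutation (filter f l) (filter f l').
Proof.
  induction 1; simpl.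
  - constructor.
  - destruct (f x); auto.
  - destruct (f x), (f y); auto using perm_swap, Permutation_refl.
  - eapply perm_trans; eauto.
Qed.

Lemma nodup_map_inj {A B} (f : A -> B) l : (forall x y, f x = f y -> x = y) -> NoDup l -> NoDup (map f l).
Proof.
  intros Hf. induction 1; simpl; constructor; auto.
  intros Hin. apply in_map_iff in Hin. destruct Hin as [y [E Hy]]. apply Hf in E. subst; auto.
Qed.

Lemma Cprod_perm l l' f : Permutation l l' -> Cprod l f = Cprod l' f.
Proof. induction 1; simpl; auto. rewrite IHPermutation; auto. ring. congruence. Qed.
Lemma Csum_perm l l' f : Permutation l l' -> Csum l f = Csum l' f.
Proof. induction 1; simpl; auto. rewrite IHPermutation; auto. ring. congruence. Qed.
Lemma Cprod_map g l f : Cprod (map g l) f = Cprod l (fun a => f (g a)).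
Proof. induction l; simpl; auto. rewrite IHl; auto. Qed.
Lemma Csum_map g l f : Csum (map g l) f = Csum l (fun a => f (g a)).
Proof. induction l; simpl; auto. rewrite IHl; auto. Qed.
Lemma Cprod_ext l f g : (forall a, f a = g a) -> Cprod l f = Cprod l g.
Proof. intros H; induction l; simpl; auto. rewrite IHl, H; auto. Qed.
Lemma Csum_ext l f g : (forall a, f a = g a) -> Csum l f = Csum l g.
Proof. intros H; induction l; simpl; auto. rewrite IHl, H; auto. Qed.

Lemma flat_map_map' {A B C'} (f : B -> C') (g : A -> list B) l :
  map f (flat_map g l) = flat_map (fun x => map f (g x)) l.
Proof. induction l; simpl; auto. rewrite map_app, IHl; auto. Qed.
Lemma flat_map_map2 {A B} (g : A -> list B) (h : A -> A) l :
  flat_map g (map h l) = flat_map (fun x => g (h x)) l.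
Proof. induction l; simpl; auto. rewrite IHl; auto. Qed.

Section Comb.
Variables (n : nat) (q lnq : C) (Crel : rset) (vbar : tab) (k i j : nat).
Hypothesis Hij : (1 <= i < j /\ j <= k <= n - 1)%nat.
Hypothesis Hni : ~ in_V Crel (k, i).
Hypothesis Hnj : ~ in_V Crel (k, j).
Hypothesis Hvv : vbar k i = vbar k j.

Definition sgm (r a : nat) : nat := if r =? k then (if a =? i then j else if a =? j then i else a) else a.

Lemma sig_inv r a : sgm r (sgm r a) = a.
Proof. unfold sgm. eqbs; lia. Qed.

Lemma sig_range r a : (1 <= a <= r)%nat -> (1 <= sgm r a <= r)%nat.
Proof. unfold sgm. eqbs; lia. Qed.

Lemma sig_inj r a b : sgm r a = sgm r b -> a = b.
Proof. intros E. rewrite <- (sig_inv r a), E, sig_inv. reflexivity. Qed.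

Lemma sig_notin r s : in_V Crel (r, s) -> sgm r s = s.
Proof. intros H. unfold sgm. eqbs; subst; auto; contradiction. Qed.

Lemma tau_inv w : tau k i j (tau k i j w) = w.
Proof. apply functional_extensionality; intro r; apply functional_extensionality; intro s.
  unfold tau. eqbs; simpl; subst; auto; lia. Qed.

Lemma bump_tau z r jj d : bump (tau k i j z) r jj d = tau k i j (bump z r (sgm r jj) d).
Proof. apply functional_extensionality; intro r'; apply functional_extensionality; intro s'.
  unfold bump, tau, sgm. eqbs; simpl; subst; auto; lia. Qed.

Lemma gent_tau z (xy : C * C) r s :
  gent n vbar k i j (tau k i j z) xy r s = gent n vbar k i j z (snd xy, fst xy) r (sgm r s).
Proof. unfold gent, tau, sgm, Defs.shift. simpl. eqbs; simpl; subst; auto; try lia. Qed.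

Lemma shift_tau w r s : Defs.shift n vbar (tau k i j w) r s = Defs.shift n vbar w r (sgm r s).
Proof. unfold Defs.shift, tau, sgm. eqbs; simpl; subst; auto; try lia.
  - rewrite Hvv. reflexivity.
  - rewrite Hvv. reflexivity.
Qed.


Lemma inV_sub P p : component Crel P -> in_V P p -> in_V Crel p.
Proof. intros [_ [HPC _]] [rho [Hr Hin]]. exists rho; auto. Qed.

Lemma inB_tau w : inB n lnq Crel vbar k i j w -> inB n lnq Crel vbar k i j (tau k i j w).
Proof.
  unfold inB. intros [Hrel Hint]. split.
  - intros rho Hrho. specialize (Hrel rho Hrho).
    destruct rho as [[r s] [r' s'] | [r s] [r' s']]; simpl in *; rewrite !shift_tau;
    rewrite (sig_notin r s), (sig_notin r' s'); auto;
    solve [exists (Defs.Rge (r, s) (r', s')); simpl; auto | exists (Defs.Rgt (r, s) (r', s')); simpl; auto].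
  - intros k' a b Hk' Ha Hb Hab HZ. rewrite !shift_tau in HZ.
    assert (Hab' : sgm k' a <> sgm k' b) by (intro E; apply Hab; exact (sig_inj _ _ _ E)).
    destruct (Hint k' (sgm k' a) (sgm k' b) Hk' (sig_range _ _ Ha) (sig_range _ _ Hb) Hab' HZ)
      as [[Hk [[E1 E2]|[E1 E2]]] | [P [HP [H1 H2]]]].
    + left. subst k'. unfold sgm in E1, E2. split; auto. eqbs; lia.
    + left. subst k'. unfold sgm in E1, E2. split; auto. eqbs; lia.
    + right. exists P. split; auto.
      assert (Ea : sgm k' a = a).
      { rewrite <- (sig_inv k' a) at 2. symmetry. apply sig_notin. eapply inV_sub; eauto. }
      assert (Eb : sgm k' b = b).
      { rewrite <- (sig_inv k' b) at 2. symmetry. apply sig_notin. eapply inV_sub; eauto. }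
      rewrite Ea in H1. rewrite Eb in H2. auto.
Qed.

Lemma inB_tau_iff w : inB n lnq Crel vbar k i j (tau k i j w) <-> inB n lnq Crel vbar k i j w.
Proof. split; intros H. rewrite <- (tau_inv w). apply inB_tau; auto. apply inB_tau; auto. Qed.

Lemma pdec_iff (P Q : Prop) : (P <-> Q) -> pdec P = pdec Q.
Proof. intros H. unfold pdec. destruct (excluded_middle_informative P), (excluded_middle_informative Q); tauto. Qed.

Lemma perm_sig r : Permutation (map (sgm r) (seq 1 r)) (seq 1 r).
Proof.
  apply NoDup_Permutation.
  - apply nodup_map_inj. apply sig_inj. apply seq_NoDup.
  - apply seq_NoDup.
  - intros x. rewrite in_map_iff. split.
    + intros [y [E Hy]]. subst. apply in_seq. apply in_seq in Hy. pose proof (sig_range r y). lia.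
    + intros Hx. exists (sgm r x). split. apply sig_inv. apply in_seq. apply in_seq in Hx.
      pose proof (sig_range r x). lia.
Qed.

Lemma Cprod_sig r (f g : nat -> C) : (forall a, f a = g (sgm r a)) -> Cprod (seq 1 r) f = Cprod (seq 1 r) g.
Proof. intros H. rewrite (Cprod_ext _ _ _ H), <- Cprod_map. apply Cprod_perm, perm_sig. Qed.
Lemma Csum_sig r (f g : nat -> C) : (forall a, f a = g (sgm r a)) -> Csum (seq 1 r) f = Csum (seq 1 r) g.
Proof. intros H. rewrite (Csum_ext _ _ _ H), <- Csum_map. apply Csum_perm, perm_sig. Qed.

Lemma filter_map_sig r jj l :
  filter (fun a => negb (a =? sgm r jj)) (map (sgm r) l) = map (sgm r) (filter (fun a => negb (a =? jj)) l).
Proof.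
  induction l as [|a l IH]; simpl; auto.
  replace (sgm r a =? sgm r jj) with (a =? jj).
  - destruct (a =? jj); simpl; rewrite IH; auto.
  - destruct (Nat.eqb_spec a jj) as [E1|E1], (Nat.eqb_spec (sgm r a) (sgm r jj)) as [E2|E2]; subst; auto;
    try congruence. apply sig_inj in E2; contradiction.
Qed.

Lemma Cprod_sig_filter r jj (f g : nat -> C) : (forall a, f a = g (sgm r a)) ->
  Cprod (filter (fun a => negb (a =? jj)) (seq 1 r)) f = Cprod (filter (fun a => negb (a =? sgm r jj)) (seq 1 r)) g.
Proof. intros H. rewrite (Cprod_ext _ _ _ H), <- Cprod_map, <- filter_map_sig.
  apply Cprod_perm, perm_filter. apply perm_sig. Qed.

Lemma flat_map_perm_sig {A} (Ez Et : nat -> list A) (sw : A -> A) r :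
  (forall jj, Et jj = map sw (Ez (sgm r jj))) -> Permutation (flat_map Et (seq 1 r)) (map sw (flat_map Ez (seq 1 r))).
Proof.
  intros H. rewrite (flat_map_ext _ _ H), flat_map_map'.
  rewrite <- (flat_map_map2 (fun x => map sw (Ez x)) (sgm r)).
  apply Permutation_flat_map, perm_sig.
Qed.

Definition swapE (e : (C * C -> C) * idx) : (C * C -> C) * idx :=
  (fun xy => fst e (snd xy, fst xy), tau k i j (snd e)).

Lemma act_tau g z : Permutation (act n q lnq Crel vbar k i j g (tau k i j z)) (map swapE (act n q lnq Crel vbar k i j g z)).
Proof.
  destruct g as [r|r|r]; unfold act.
  - apply flat_map_perm_sig. intros jj. rewrite bump_tau.
    rewrite (pdec_iff _ _ (inB_tau_iff _)).
    destruct (pdec _); simpl; [|reflexivity]. f_equal. unfold swapE; simpl. f_equal.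
    apply functional_extensionality; intros xy. simpl. f_equal.
    + f_equal. apply Cprod_sig. intros a. rewrite !gent_tau. reflexivity.
    + apply Cprod_sig_filter. intros a. rewrite !gent_tau. reflexivity.
  - apply flat_map_perm_sig. intros jj. rewrite bump_tau.
    rewrite (pdec_iff _ _ (inB_tau_iff _)).
    destruct (pdec _); simpl; [|reflexivity]. f_equal. unfold swapE; simpl. f_equal.
    apply functional_extensionality; intros xy. simpl. f_equal.
    + apply Cprod_sig. intros a. rewrite !gent_tau. reflexivity.
    + apply Cprod_sig_filter. intros a. rewrite !gent_tau. reflexivity.
  - unfold swapE; simpl. match goal with |- Permutation ?a ?b => replace b with a; [apply Permutation_refl|] end.
    f_equal. f_equal.
    apply functional_extensionality; intros xy. simpl. f_equal. f_equal. f_equal.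
    + apply Csum_sig. intros a. rewrite !gent_tau. reflexivity.
    + apply Csum_sig. intros a. rewrite !gent_tau. reflexivity.
Qed.

Definition sumL (l : qelt) (f : idx -> C -> C -> C) : C :=
  fold_right (fun t acc => let '(z, a, b) := t in f z a b + acc) 0 l.

Lemma sumL_perm l l' f : Permutation l l' -> sumL l f = sumL l' f.
Proof. induction 1; simpl; auto.
  - destruct x as [[? ?] ?]. rewrite IHPermutation. reflexivity.
  - destruct x as [[? ?] ?], y as [[? ?] ?]. ring.
  - congruence. Qed.

Lemma sumL_lin l f g al be : sumL l (fun z a b => al * f z a b + be * g z a b) = al * sumL l f + be * sumL l g.
Proof. induction l as [|[[z a] b] l IH]; simpl. ring. rewrite IH. ring. Qed.

Lemma sumL_ext l f g : (forall z a b, f z a b = g z a b) -> sumL l f = sumL l g.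
Proof. intros H. induction l as [|[[z a] b] l IH]; simpl; auto. rewrite IH, H. reflexivity. Qed.

Lemma coefT_sumL u w : coefT n u w = sumL u (fun z a b => a * Defs.ind n z w).
Proof. induction u as [|[[z a] b] u IH]; simpl; auto. rewrite IH. unfold Defs.ind.
  destruct (idx_eqb n z w); ring. Qed.
Lemma coefD_sumL u w : coefD n u w = sumL u (fun z a b => b * Defs.ind n z w).
Proof. induction u as [|[[z a] b] u IH]; simpl; auto. rewrite IH. unfold Defs.ind.
  destruct (idx_eqb n z w); ring. Qed.

Lemma sumL_qneg u f : sumL (qneg u) f = sumL u (fun z a b => f z (-a) (-b)).
Proof. induction u as [|[[z a] b] u IH]; simpl; auto. rewrite IH. reflexivity. Qed.

Lemma perm_F2 {A B} (R : A -> B -> Prop) l1 l2 d1 : Permutation l1 l2 -> Forall2 R l1 d1 ->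
  exists d2, Forall2 R l2 d2 /\ Permutation (combine l1 d1) (combine l2 d2).
Proof.
  intros HP. revert d1. induction HP; intros d1 HF.
  - inversion HF; subst. exists nil; split; constructor.
  - inversion HF; subst. destruct (IHHP _ H3) as [d2 [G1 G2]].
    exists (y :: d2). split. constructor; auto. simpl. apply perm_skip; auto.
  - inversion HF; subst. inversion H3; subst. exists (y1 :: y0 :: l'0). split.
    repeat constructor; auto. simpl. apply perm_swap.
  - destruct (IHHP1 _ HF) as [d2 [H1 H2]]. destruct (IHHP2 _ H1) as [d3 [H3 H4]].
    exists d3. split; auto. eapply perm_trans; eauto.
Qed.

Lemma D_image_perm S S' dS dS' : Permutation (combine S dS) (combine S' dS') ->
  Permutation (D_image S dS) (D_image S' dS').
Proof. intros H. unfold D_image. apply Permutation_map. exact H. Qed.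

Lemma D_image_inB S dL : List.Forall (fun e => inB n lnq Crel vbar k i j (snd e)) S ->
  List.Forall (fun t => let '(z, a, b) := t in inB n lnq Crel vbar k i j z /\ inB n lnq Crel vbar k i j (tau k i j z))
    (D_image S dL).
Proof.
  revert dL. induction S as [|e S IH]; intros dL HS; [constructor|].
  destruct dL as [|cd dL]; [constructor|]. inversion HS; subst.
  destruct e as [f w], cd as [c d]. simpl. constructor; auto. simpl in *. split; auto. apply inB_tau; auto.
  apply IH; auto.
Qed.

Lemma D_image_cons e cd S d : D_image (e :: S) (cd :: d) = (snd e, snd cd, fst cd) :: D_image S d.
Proof. destruct e, cd; reflexivity. Qed.
Lemma coefT_cons z a b u w : coefT n ((z, a, b) :: u) w = (if idx_eqb n z w then a else 0) + coefT n u w.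
Proof. reflexivity. Qed.
Lemma coefD_cons z a b u w : coefD n ((z, a, b) :: u) w = (if idx_eqb n z w then b else 0) + coefD n u w.
Proof. reflexivity. Qed.
Lemma sumL_cons z a b u f : sumL ((z, a, b) :: u) f = f z a b + sumL u f.
Proof. reflexivity. Qed.

Lemma core (h : (C * C -> C) * idx -> (C * C -> C) * idx) (s : C) S dL dR :
  (forall e, snd (h e) = tau k i j (snd e)) ->
  (forall e x y, fst (h e) (x, y) = s * fst e (y, x)) ->
  List.Forall2 (fun fw cd => has_val_D q lnq (vbar k i) (vbar k i) (fst fw) (fst cd) (snd cd)) S dL ->
  List.Forall2 (fun fw cd => has_val_D q lnq (vbar k i) (vbar k i) (fst fw) (fst cd) (snd cd)) (map h S) dR ->
  forall w, coefT n (D_image (map h S) dR) w = sumL (D_image S dL) (fun z a b => (-(s*a)) * Defs.ind n (tau k i j z) w) /\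
            coefD n (D_image (map h S) dR) w = sumL (D_image S dL) (fun z a b => (s*b) * Defs.ind n (tau k i j z) w).
Proof.
  intros H1 H2 HL. revert dR. induction HL as [|e cd S dL Hh HL IH]; intros dR HR w.
  - inversion HR; subst. split; reflexivity.
  - change (map h (e :: S)) with (h e :: map h S) in *.
    inversion HR as [|e' cd' S' dR' Hh' HR']; subst.
    destruct (IH _ HR' w) as [IT ID].
    destruct (swap_data _ _ _ _ _ _ _ _ _ s Hh Hh' (H2 e)) as [Ec Ed].
    rewrite !D_image_cons, H1. destruct cd as [c d], cd' as [c' d']. simpl in Ec, Ed.
    rewrite coefT_cons, coefD_cons, !sumL_cons, IT, ID. subst c' d'.
    unfold Defs.ind. destruct (idx_eqb n (tau k i j (snd e)) w); split; rewrite ?Cmult_1_r, ?Cmult_0_r, ?Cplus_0_l; reflexivity.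
Qed.

Lemma coefT_qneg u w : coefT n (qneg u) w = - coefT n u w.
Proof. induction u as [|[[z a] b] u IH]; simpl. ring. rewrite IH. destruct (idx_eqb n z w); ring. Qed.
Lemma coefD_qneg u w : coefD n (qneg u) w = - coefD n u w.
Proof. induction u as [|[[z a] b] u IH]; simpl. ring. rewrite IH. destruct (idx_eqb n z w); ring. Qed.

Lemma act_inB g z : inB n lnq Crel vbar k i j z ->
  forall e, In e (act n q lnq Crel vbar k i j g z) -> inB n lnq Crel vbar k i j (snd e).
Proof.
  intros Hz e He. destruct g as [r|r|r]; unfold act in He.
  - apply in_flat_map in He. destruct He as [jj [_ Hjj]].
    destruct (pdec _) eqn:Ep in Hjj; [|destruct Hjj].
    destruct Hjj as [<-|[]]. simpl. unfold pdec in Ep. destruct (excluded_middle_informative _); auto; discriminate.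
  - apply in_flat_map in He. destruct He as [jj [_ Hjj]].
    destruct (pdec _) eqn:Ep in Hjj; [|destruct Hjj].
    destruct Hjj as [<-|[]]. simpl. unfold pdec in Ep. destruct (excluded_middle_informative _); auto; discriminate.
  - destruct He as [<-|[]]. exact Hz.
Qed.

Lemma qnum_anti x y : qnum q lnq (x - y) = - qnum q lnq (y - x).
Proof. unfold qnum. replace (x - y) with (- (y - x)) by ring. replace (- - (y - x)) with (y - x) by ring.
  unfold Cdiv. ring. Qed.

Definition hneg (e : (C * C -> C) * idx) : (C * C -> C) * idx :=
  (fun xy => - fst e (snd xy, fst xy), tau k i j (snd e)).

Lemma scale_perm g z : Permutation (scale_qxy q lnq (act n q lnq Crel vbar k i j g (tau k i j z)))
   (map hneg (scale_qxy q lnq (act n q lnq Crel vbar k i j g z))).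
Proof.
  unfold scale_qxy. eapply perm_trans. apply Permutation_map. apply act_tau.
  rewrite !map_map. match goal with |- Permutation ?a ?b => replace b with a; [apply Permutation_refl|] end.
  apply map_ext. intros [F w]. unfold swapE, hneg. simpl. f_equal.
  apply functional_extensionality. intros [x y]. simpl. rewrite qnum_anti. ring.
Qed.

End Comb.

Theorem proposition4p3
  (n : nat) (q lnq : C) (Crel : rset) (vbar : tab) (k i j : nat)
  (Hn : (2 <= n)%nat)
  (Hq0 : q <> 0) (Hq1 : q <> 1) (Hqm1 : q <> - (1))
  (Hlnq : cexp lnq = q)
  (HCR : forall rho, Crel rho -> in_R n rho)
  (HCadm : admissible n Crel)
  (Hsing : one_C_singular n lnq Crel vbar k i j)
  (z : idx) (Hz : inB n lnq Crel vbar k i j z)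
  (g : gen) (Hg : valid_gen n g) :
  (* (i) *)
  (forall dataL dataR : list (C * C),
     List.Forall2 (fun fw cd => has_val_D q lnq (vbar k i) (vbar k j) (fst fw) (fst cd) (snd cd))
       (scale_qxy q lnq (act n q lnq Crel vbar k i j g z)) dataL ->
     List.Forall2 (fun fw cd => has_val_D q lnq (vbar k i) (vbar k j) (fst fw) (fst cd) (snd cd))
       (scale_qxy q lnq (act n q lnq Crel vbar k i j g (tau k i j z))) dataR ->
     Qeq n lnq Crel vbar k i j
       (D_image (scale_qxy q lnq (act n q lnq Crel vbar k i j g z)) dataL)
       (D_image (scale_qxy q lnq (act n q lnq Crel vbar k i j g (tau k i j z))) dataR))
  /\
  (* (ii) *)
  (idx_eqb n (tau k i j z) z = false ->
   forall dataL dataR : list (C * C),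
     List.Forall2 (fun fw cd => has_val_D q lnq (vbar k i) (vbar k j) (fst fw) (fst cd) (snd cd))
       (act n q lnq Crel vbar k i j g z) dataL ->
     List.Forall2 (fun fw cd => has_val_D q lnq (vbar k i) (vbar k j) (fst fw) (fst cd) (snd cd))
       (act n q lnq Crel vbar k i j g (tau k i j z)) dataR ->
     Qeq n lnq Crel vbar k i j
       (D_image (act n q lnq Crel vbar k i j g z) dataL)
       (qneg (D_image (act n q lnq Crel vbar k i j g (tau k i j z)) dataR))).
Proof.
  destruct Hsing as [Hsat [Hij [Hni [Hnj [HZ [Huniq Hvv]]]]]].
  split.
  - intros dataL dataR HL HR. rewrite <- Hvv in HL, HR.
    destruct (perm_F2 _ _ _ _ (scale_perm n q lnq Crel vbar k i j Hij Hni Hnj Hvv g z) HR) as [dR2 [HR2 Hc]].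
    exists (D_image (scale_qxy q lnq (act n q lnq Crel vbar k i j g z)) dataL). split.
    + apply D_image_inB; auto. apply Forall_forall. intros e He. unfold scale_qxy in He.
      apply in_map_iff in He. destruct He as [e0 [E He0]]. subst e. simpl.
      eapply act_inB; eauto.
    + intros w.
      destruct (core n q lnq vbar k i j (hneg k i j) (- (1)) _ _ _
                  (fun e => eq_refl) (fun e x y => ltac:(simpl; ring)) HL HR2 w) as [CT CD].
      rewrite (coefT_sumL n (D_image (scale_qxy _ _ (act _ _ _ _ _ _ _ _ _ (tau _ _ _ _))) _)),
              (sumL_perm _ _ _ (D_image_perm _ _ _ _ Hc)), <- coefT_sumL, CT.
      rewrite (coefD_sumL n (D_image (scale_qxy _ _ (act _ _ _ _ _ _ _ _ _ (tau _ _ _ _))) _)),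
              (sumL_perm _ _ _ (D_image_perm _ _ _ _ Hc)), <- coefD_sumL, CD.
      rewrite coefT_sumL, coefD_sumL. split.
      * match goal with |- _ = fold_right _ _ ?rels => 
          transitivity (sumL rels (fun z a b => a * (Defs.ind n z w - Defs.ind n (tau k i j z) w))); [|reflexivity] end.
        rewrite (sumL_ext _ (fun z a b => a * (Defs.ind n z w - Defs.ind n (tau k i j z) w)) (fun z a b => 1 * (a * Defs.ind n z w) + (-(1)) * (-(-(1) * a) * Defs.ind n (tau k i j z) w))); [rewrite sumL_lin; ring | intros; ring].
      * match goal with |- _ = fold_right _ _ ?rels => 
          transitivity (sumL rels (fun z a b => b * (Defs.ind n z w + Defs.ind n (tau k i j z) w))); [|reflexivity] end.
        rewrite (sumL_ext _ (fun z a b => b * (Defs.ind n z w + Defs.ind n (tau k i j z) w)) (fun z a b => 1 * (b * Defs.ind n z w) + (-(1)) * (-(1) * b * Defs.ind n (tau k i j z) w))); [rewrite sumL_lin; ring | intros; ring].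
  - intros Hne dataL dataR HL HR. rewrite <- Hvv in HL, HR.
    destruct (perm_F2 _ _ _ _ (act_tau n q lnq Crel vbar k i j Hij Hni Hnj Hvv g z) HR) as [dR2 [HR2 Hc]].
    exists (D_image (act n q lnq Crel vbar k i j g z) dataL). split.
    + apply D_image_inB; auto. apply Forall_forall. intros e He.
      eapply act_inB; eauto.
    + intros w.
      destruct (core n q lnq vbar k i j (swapE k i j) 1 _ _ _
                  (fun e => eq_refl) (fun e x y => ltac:(simpl; ring)) HL HR2 w) as [CT CD].
      rewrite coefT_qneg, coefD_qneg.
      rewrite (coefT_sumL n (D_image (act _ _ _ _ _ _ _ _ _ (tau _ _ _ _)) _)),
              (sumL_perm _ _ _ (D_image_perm _ _ _ _ Hc)), <- coefT_sumL, CT.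
      rewrite (coefD_sumL n (D_image (act _ _ _ _ _ _ _ _ _ (tau _ _ _ _)) _)),
              (sumL_perm _ _ _ (D_image_perm _ _ _ _ Hc)), <- coefD_sumL, CD.
      rewrite coefT_sumL, coefD_sumL. split.
      * match goal with |- _ = fold_right _ _ ?rels => 
          transitivity (sumL rels (fun z a b => a * (Defs.ind n z w - Defs.ind n (tau k i j z) w))); [|reflexivity] end.
        rewrite (sumL_ext _ (fun z a b => a * (Defs.ind n z w - Defs.ind n (tau k i j z) w)) (fun z a b => 1 * (a * Defs.ind n z w) + 1 * (-(1 * a) * Defs.ind n (tau k i j z) w))); [rewrite sumL_lin; ring | intros; ring].
      * match goal with |- _ = fold_right _ _ ?rels => 
          transitivity (sumL rels (fun z a b => b * (Defs.ind n z w + Defs.ind n (tau k i j z) w))); [|reflexivity] end.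
        rewrite (sumL_ext _ (fun z a b => b * (Defs.ind n z w + Defs.ind n (tau k i j z) w)) (fun z a b => 1 * (b * Defs.ind n z w) + 1 * (1 * b * Defs.ind n (tau k i j z) w))); [rewrite sumL_lin; ring | intros; ring].
Qed.
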